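(* Under the hypotheses of Theorem 1 (i.e., $(\mathbf{A},\mathbf{C})$ observable and $\{\mathcal{G}[k]\}$ satisfying the joint strong-connectivity assumption with parameter $T$), there exist observer gains $\mathbf{L}_1,\dots,\mathbf{L}_N$ (namely, any gains such that each $\mathbf{A}_{jj}-\mathbf{L}_j\mathbf{C}_{jj}$ is nilpotent) such that, when every node runs the freshness-index algorithm, for all initial states and all initial estimates, $\hat{\mathbf{z}}_i[k]=\mathbf{z}[k]$ (equivalently $\hat{\mathbf{x}}_i[k]=\mathbf{T}\hat{\mathbf{z}}_i[k]=\mathbf{x}[k]$) for every $i\in\mathcal{V}$ and every $k\ge n+2N(N-1)T$.
   Context: Graphs. Nodes $\mathcal{V}=\{1,\dots,N\}$. At each time $k\in\mathbb{N}=\{0,1,2,\dots\}$ there is a directed graph $\mathcal{G}[k]=(\mathcal{V},\mathcal{E}[k])$; $(i,j)\in\mathcal{E}[k]$ means node $i$ can send information to node $j$ at time $k$. $\mathcal{N}_i[k]=\{l\neq i:(l,i)\in\mathcal{E}[k]\}$ is the set of neighbors of $i$ at time $k$. The union graph over an interval of times has vertex set $\mathcal{V}$ and edge set the union of the edge sets over that interval. Joint strong-connectivity assumption: there is $T\in\mathbb{N}_+=\{1,2,\dots\}$ such that for every $k\in\mathbb{N}$ the union graph over $[kT,(k+1)T)$ is strongly connected. System. $\mathbf{x}[k+1]=\mathbf{A}\mathbf{x}[k]$, $\mathbf{y}_i[k]=\mathbf{C}_i\mathbf{x}[k]$, $\mathbf{A}\in\mathbb{R}^{n\times n}$, $\mathbf{C}=[\mathbf{C}_1^T\cdots\mathbf{C}_N^T]^T$.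 Since $(\mathbf{A},\mathbf{C})$ is observable, there is an invertible $\mathbf{T}$ (fixed throughout) such that with $\mathbf{x}[k]=\mathbf{T}\mathbf{z}[k]$ one has $\mathbf{z}[k+1]=\bar{\mathbf{A}}\mathbf{z}[k]$, $\mathbf{y}_i[k]=\mathbf{C}_i\mathbf{T}\mathbf{z}[k]$, where $\mathbf{z}=[\mathbf{z}^{(1)T}\cdots\mathbf{z}^{(N)T}]^T$ with $\mathbf{z}^{(j)}\in\mathbb{R}^{n_j}$ (''substate $j$''), $\sum_j n_j=n$, $\bar{\mathbf{A}}=\mathbf{T}^{-1}\mathbf{A}\mathbf{T}$ is block lower triangular with blocks $\mathbf{A}_{jq}$ ($\mathbf{A}_{jq}=0$ for $q>j$), so $\mathbf{z}^{(j)}[k+1]=\mathbf{A}_{jj}\mathbf{z}^{(j)}[k]+\sum_{q=1}^{j-1}\mathbf{A}_{jq}\mathbf{z}^{(q)}[k]$; and $\mathbf{C}_i\mathbf{T}=[\mathbf{C}_{i1}\ \cdots\ \mathbf{C}_{ii}\ 0\ \cdots\ 0]$, so $\mathbf{y}_i[k]=\sum_{q=1}^{i}\mathbf{C}_{iq}\mathbf{z}^{(q)}[k]$; moreover each pair $(\mathbf{A}_{jj},\mathbf{C}_{jj})$ is observable. Node $j$ is called the source node of substate $j$. Freshness indices. For each substate $j$ and node $i$, node $i$ keeps $\tau^{(j)}_i[k]\in\{\omega\}\cup\mathbb{N}$, where $\omega$ is a special symbol. Initialization: $\tau^{(j)}_j[0]=0$, $\tau^{(j)}_i[0]=\omega$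 for $i\neq j$. The source keeps $\tau^{(j)}_j[k]=0$ for all $k$. For $i\neq j$, let $\mathcal{M}^{(j)}_i[k]=\{l\in\mathcal{N}_i[k]:\tau^{(j)}_l[k]\neq\omega\}$. Case 1, $\tau^{(j)}_i[k]=\omega$: if $\mathcal{M}^{(j)}_i[k]\neq\emptyset$, let $u$ be any minimizer of $\tau^{(j)}_l[k]$ over $l\in\mathcal{M}^{(j)}_i[k]$, set $\tau^{(j)}_i[k+1]=\tau^{(j)}_u[k]+1$ and perform an ''adopt-$u$'' estimate update; otherwise set $\tau^{(j)}_i[k+1]=\omega$ and perform an ''open-loop'' estimate update. Case 2, $\tau^{(j)}_i[k]\neq\omega$: let $\mathcal{F}^{(j)}_i[k]=\{l\in\mathcal{M}^{(j)}_i[k]:\tau^{(j)}_l[k]<\tau^{(j)}_i[k]\}$; if nonempty, let $u$ be any minimizer of $\tau^{(j)}_l[k]$ over $\mathcal{F}^{(j)}_i[k]$, set $\tau^{(j)}_i[k+1]=\tau^{(j)}_u[k]+1$ and perform an adopt-$u$ update; otherwise set $\tau^{(j)}_i[k+1]=\tau^{(j)}_i[k]+1$ and perform an open-loop update. Estimates. Each node $i$ keeps $\hat{\mathbf{z}}_i[k]=[\hat{\mathbf{z}}^{(1)T}_i[k]\cdots\hat{\mathbf{z}}^{(N)T}_i[k]]^T$, with arbitrary initial value. Source update for substate $j$: $\hat{\mathbf{z}}^{(j)}_j[k+1]=(\mathbf{A}_{jj}-\mathbf{L}_j\mathbf{C}_{jj})\hat{\mathbf{z}}^{(j)}_j[k]+\sum_{q=1}^{j-1}(\mathbf{A}_{jq}-\mathbf{L}_j\mathbf{C}_{jq})\hat{\mathbf{z}}^{(q)}_j[k]+\mathbf{L}_j\mathbf{y}_j[k]$.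 Adopt-$u$ update at node $i\ne j$: $\hat{\mathbf{z}}^{(j)}_i[k+1]=\mathbf{A}_{jj}\hat{\mathbf{z}}^{(j)}_u[k]+\sum_{q=1}^{j-1}\mathbf{A}_{jq}\hat{\mathbf{z}}^{(q)}_i[k]$. Open-loop update at node $i\neq j$: $\hat{\mathbf{z}}^{(j)}_i[k+1]=\mathbf{A}_{jj}\hat{\mathbf{z}}^{(j)}_i[k]+\sum_{q=1}^{j-1}\mathbf{A}_{jq}\hat{\mathbf{z}}^{(q)}_i[k]$. These updates are carried out for every substate $j$ at every time $k$. *)

(* Defs.v *)
From HB Require Import structures.
From mathcomp Require Import all_boot all_order all_algebra.
Set Implicit Arguments. Unset Strict Implicit. Unset Printing Implicit Defensive.
Import Order.TTheory GRing.Theory Num.Theory.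
Local Open Scope ring_scope.

Definition nilpotent_mx (R : pzRingType) (m : nat) (M : 'M[R]_m) : Prop :=
  exists k : nat, M ^+ k = 0.

Definition obs_mx (R : fieldType) (m p : nat) (A : 'M[R]_m) (C : 'M[R]_(p, m))
  : 'M[R]_(\sum_(k < m) p, m) :=
  \mxcol_(k < m) (C *m A ^+ k).

Definition observable (R : fieldType) (m p : nat) (A : 'M[R]_m) (C : 'M[R]_(p, m))
  : Prop := \rank (obs_mx A C) = m.

Definition block_lower (R : fieldType) (N : nat) (r c : 'I_N -> nat)
  (B : forall j q : 'I_N, 'M[R]_(r j, c q)) : Prop :=
  forall j q : 'I_N, (j < q)%N -> B j q = 0.

(* Time-varying directed graphs on nodes 'I_N: E k l i means (l,i) is an edge
   at time k, i.e. l can send to i at time k. *)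
Definition neighbor (N : nat) (E : nat -> rel 'I_N) (k : nat) (i l : 'I_N) : bool :=
  (l != i) && E k l i.

Definition union_rel (N : nat) (E : nat -> rel 'I_N) (a T : nat) : rel 'I_N :=
  fun u v => has (fun t => E t u v) (iota a T).

Definition jointly_strongly_connected (N : nat) (E : nat -> rel 'I_N) (T : nat) : Prop :=
  (0 < T)%N /\
  forall k : nat, forall u v : 'I_N, connect (union_rel E (k * T) T) u v.

Section Algo.
Variables (R : fieldType) (N : nat) (n p : 'I_N -> nat).
Variables (A : forall j q : 'I_N, 'M[R]_(n j, n q)).
Variables (C : forall i q : 'I_N, 'M[R]_(p i, n q)).

Definition state_traj (z : nat -> forall j : 'I_N, 'cV[R]_(n j)) : Prop :=
  forall k (j : 'I_N),
    z k.+1 j = A j j *m z k j + \sum_(q < N | (q < j)%N) A j q *m z k q.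

Definition output (z : nat -> forall j : 'I_N, 'cV[R]_(n j)) (k : nat) (i : 'I_N)
  : 'cV[R]_(p i) := \sum_(q < N | (q <= i)%N) C i q *m z k q.

Variable (E : nat -> rel 'I_N).
Variable (L : forall j : 'I_N, 'M[R]_(n j, p j)).

(* Freshness index: None stands for the special symbol omega. *)
(* Candidate set used by node i (i <> j) for substate j at time k:
   case 1 (tau_i = omega): M_i^(j)[k]; case 2 (tau_i = Some a): F_i^(j)[k]. *)
Definition candidate (tau : nat -> 'I_N -> 'I_N -> option nat)
    (k : nat) (j i l : 'I_N) : bool :=
  neighbor E k i l &&
  match tau k j i, tau k j l with
  | None, Some _ => true
  | Some a, Some b => (b < a)%N
  | _, None => false
  end.

(* A run of the freshness-index algorithm (for every admissible choice of
   minimizers), with true state z and estimates zh (zh k i j = estimate of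
   substate j at node i at time k). *)
Definition freshness_run (z : nat -> forall j : 'I_N, 'cV[R]_(n j))
    (tau : nat -> 'I_N -> 'I_N -> option nat)
    (zh : nat -> 'I_N -> forall j : 'I_N, 'cV[R]_(n j)) : Prop :=
  (forall j i : 'I_N, tau 0%N j i = (if i == j then Some 0%N else None)) /\
  (forall k (j : 'I_N),
     tau k.+1 j j = Some 0%N /\
     zh k.+1 j j = (A j j - L j *m C j j) *m zh k j j
                   + \sum_(q < N | (q < j)%N) (A j q - L j *m C j q) *m zh k j q
                   + L j *m output z k j) /\
  (forall k (j i : 'I_N), i != j ->
     ((exists l, candidate tau k j i l) ->
        exists u : 'I_N,
          [/\ candidate tau k j i u,
              (forall l, candidate tau k j i l ->
                 (odflt 0 (tau k j u) <= odflt 0 (tau k j l))%N),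
              tau k.+1 j i = omap S (tau k j u) &
              zh k.+1 i j = A j j *m zh k u j
                            + \sum_(q < N | (q < j)%N) A j q *m zh k i q]) /\
     (~ (exists l, candidate tau k j i l) ->
        tau k.+1 j i = omap S (tau k j i) /\
        zh k.+1 i j = A j j *m zh k i j
                      + \sum_(q < N | (q < j)%N) A j q *m zh k i q)).

End Algo.

(* Main.v *)
Require Import Defs.
From HB Require Import structures.
From mathcomp Require Import all_boot all_order all_algebra zify.
From Stdlib Require Import ClassicalEpsilon.
Set Implicit Arguments. Unset Strict Implicit. Unset Printing Implicit Defensive.
Import Order.TTheory GRing.Theory Num.Theory.
Local Open Scope ring_scope.

Lemma subB_sub (F : fieldType) m1 m2 n (A B : 'M[F]_(m1, n)) (C : 'M_(m2, n)) :
  (A <= C)%MS -> (B <= C)%MS -> ((A - B)%R <= C)%MS.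
Proof. by move=> sA sB; apply: addmx_sub => //; rewrite eqmx_opp. Qed.

Section Deadbeat.
Variables (F : fieldType) (m p : nat) (A : 'M[F]_m) (C : 'M[F]_(p, m)).

Fixpoint Wk k : 'M[F]_m :=
  match k with 0 => 0 | k'.+1 => kermx (A *m cokermx (Wk k' + C)%MS) end.
Fixpoint Uk k : 'M[F]_m :=
  match k with 0 => 0 | k'.+1 => (Uk k' + C *m A ^+ k')%MS end.

Lemma W_sub k r (X : 'M_(r, m)) : (X <= Wk k.+1)%MS = (X *m A <= Wk k + C)%MS.
Proof. by rewrite /= sub_kermx submxE mulmxA. Qed.

Lemma W_mono k : (Wk k <= Wk k.+1)%MS.
Proof.
elim: k => [|k IH]; first exact: sub0mx.
rewrite W_sub; apply: submx_trans (addsmxS IH (submx_refl C)).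
by rewrite -W_sub submx_refl.
Qed.

Lemma W_mono_le i k : (i <= k)%N -> (Wk i <= Wk k)%MS.
Proof.
move=> /subnK <-; elim: (k - i)%N => [|d IH]; first exact: submx_refl.
by apply: submx_trans IH _; rewrite addSn W_mono.
Qed.

Lemma U_mono_le i k : (i <= k)%N -> (Uk i <= Uk k)%MS.
Proof.
move=> /subnK <-; elim: (k - i)%N => [|d IH]; first exact: submx_refl.
by apply: submx_trans IH _; rewrite addSn /= addsmxSl.
Qed.

Lemma W_null k r (X : 'M_(r, m)) : (X *m A ^+ k <= Uk k)%MS -> (X <= Wk k)%MS.
Proof.
elim: k r X => [|k IH] r X; first by rewrite expr0 mulmx1.
move=> /sub_addsmxP [u eq].
pose Y := X *m A - u.2 *m C.
have HY : (Y <= Wk k)%MS.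
  apply: IH; rewrite /Y mulmxBl -!mulmxA.
  have -> : A *m A ^+ k = A ^+ k.+1 by rewrite exprS -mulmxE.
  rewrite eq.
  by rewrite addrK submxMl.
rewrite W_sub.
have -> : X *m A = Y + u.2 *m C by rewrite /Y subrK.
by apply: addmx_sub_adds => //; apply: submxMl.
Qed.

Lemma obs_full : observable A C -> (1%:M <= Wk m)%MS.
Proof.
move=> obs; rewrite -[1%:M]mul1mx; apply: W_null; rewrite mul1mx.
have ofull : (1%:M <= obs_mx A C)%MS by rewrite sub1mx /row_full obs.
apply: submx_full; rewrite -sub1mx; apply: submx_trans ofull _.
rewrite /obs_mx submxE mxcol_mul.
rewrite (@eq_mxcol _ _ _ _ (fun k : 'I_m => C *m A ^+ k *m cokermx (Uk m)) (fun _ => 0)).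
  by rewrite mxcol0.
move=> k; apply/eqP; rewrite -submxE.
apply: submx_trans (U_mono_le (ltn_ord k)); rewrite /=; exact: addsmxSr.
Qed.

Lemma W_stable k (L : 'M[F]_(m, p)) r (w : 'M_(r, m)) :
  (forall l, (l < k)%N -> (Wk l.+1 *m (A - L *m C) <= Wk l)%MS) ->
  (w <= Wk k)%MS -> (w *m (A - L *m C) <= Wk k)%MS.
Proof.
case: k => [|k] HL sw.
  by move: sw; rewrite submx0 => /eqP ->; rewrite mul0mx sub0mx.
case/submxP: sw => D ->; rewrite -mulmxA.
apply: submx_trans (submxMl _ _) _.
exact: submx_trans (HL k (ltnSn k)) (W_mono k).
Qed.

Lemma build k : exists L : 'M[F]_(m, p),
  forall l, (l < k)%N -> (Wk l.+1 *m (A - L *m C) <= Wk l)%MS.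
Proof.
elim: k => [|k [L HL]]; first by exists 0.
have /sub_addsmxP [u equ] : (Wk k.+1 *m A <= Wk k + C)%MS by rewrite -W_sub submx_refl.
pose G := pinvmx (Wk k.+1) *m u.2.
have HG : forall r (X : 'M_(r, m)), (X <= Wk k.+1)%MS -> (X *m (A - G *m C) <= Wk k)%MS.
  move=> r X sX.
  have -> : X *m (A - G *m C) = X *m pinvmx (Wk k.+1) *m u.1 *m Wk k.
    rewrite mulmxBr -{1}(mulmxKpV sX) -(mulmxA _ _ A) equ mulmxDr !mulmxA /G.
    by rewrite addrK.
  by rewrite submxMl.
pose Q := pinvmx (Wk k) *m Wk k.
have HQ : forall r (X : 'M_(r, m)), (X *m Q <= Wk k)%MS by move=> r X; rewrite mulmxA submxMl.
have HQ1 : forall r (X : 'M_(r, m)), (X <= Wk k)%MS -> X *m Q = X.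
  by move=> r X sX; rewrite mulmxA mulmxKpV.
have QQ : Q *m Q = Q by rewrite HQ1 // -[Q]mul1mx HQ.
clearbody Q G.
pose P := 1%:M - Q.
have HP : forall r (X : 'M_(r, m)), (X <= Wk k)%MS -> X *m P = 0.
  by move=> r X sX; rewrite /P mulmxBr mulmx1 HQ1 ?subrr.
have PP : P *m P = P by rewrite /P mulmxBr mulmx1 mulmxBl mul1mx QQ subrr subr0.
have Pdef : P = 1%:M - Q by [].
clearbody P.
exists (L + P *m (G - L)) => l ltl.
have Lold : forall r (X : 'M_(r, m)), (X <= Wk k)%MS ->
   X *m (A - (L + P *m (G - L)) *m C) = X *m (A - L *m C).
  move=> r X sX; rewrite !mulmxBr mulmxDl mulmxDr opprD addrA.
  by rewrite -mulmxBr -(mulmxA P) (mulmxA X P) HP // !mul0mx subr0.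
case: (ltngtP l k) ltl => [lt _ | gt | eq _].
- by rewrite Lold ?HL // W_mono_le.
- by rewrite ltnS leqNgt gt.
subst l.
set X := Wk k.+1.
pose w := X *m Q.
pose x := X *m P.
have Xwx : X = w + x by rewrite /x /w Pdef mulmxBr mulmx1 addrC subrK.
have sw : (w <= Wk k)%MS by rewrite /w HQ.
have sx : (x <= Wk k.+1)%MS.
  have -> : x = X - w by rewrite Xwx addrC addKr.
  by apply: subB_sub; [exact: submx_refl | exact: submx_trans sw (W_mono k)].
have -> : X *m (A - (L + P *m (G - L)) *m C) = w *m (A - L *m C) + x *m (A - G *m C).
  rewrite {1}Xwx mulmxDl Lold //.
  have xP : x *m P = x by rewrite /x -mulmxA PP.
  congr (_ + _); rewrite !mulmxBr; congr (_ - _).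
  rewrite !mulmxA; congr (_ *m C).
  by rewrite mulmxDr mulmxBr !mulmxA xP addrC subrK.
apply: addmx_sub; last exact: HG.
exact: W_stable HL sw.
Qed.

Lemma deadbeat : observable A C -> exists L : 'M[F]_(m, p), nilpotent_mx (A - L *m C).
Proof.
move=> obs; have [L HL] := build m; exists L; exists m.
set M := A - L *m C.
have key : forall k, (k <= m)%N -> forall r (X : 'M_(r, m)), (X <= Wk k)%MS -> X *m M ^+ k = 0.
  elim=> [|k IH] lek r X sX.
    by move: sX => /submx0null ->; rewrite mul0mx.
  rewrite exprS -mulmxE mulmxA; apply: IH; first exact: ltnW.
  exact: submx_trans (submxMr M sX) (HL k lek).
by have := key m (leqnn m) _ 1%:M (obs_full obs); rewrite mul1mx.
Qed.

End Deadbeat.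

Lemma nilp_pow (R : fieldType) m (M : 'M[R]_m) k : M ^+ k = 0 -> M ^+ m = 0.
Proof.
move=> Mk.
have key : forall i, M ^+ i = 0 \/ (\rank (M ^+ i) + i <= m)%N.
  elim=> [|i IH]; first by right; rewrite expr0 addn0 rank_leq_col.
  case: IH => [Mi0|IH]; first by left; rewrite exprS Mi0 mulr0.
  have le1 : (\rank (M ^+ i.+1) <= \rank (M ^+ i))%N.
    by rewrite exprS -mulmxE mxrankM_maxr.
  case: (ltnP (\rank (M ^+ i.+1)) (\rank (M ^+ i))) => [lt|ge].
    by right; rewrite addnS; apply: leq_trans IH; rewrite ltn_add2r.
  have eqr : \rank (M ^+ i.+1) = \rank (M ^+ i) by apply/eqP; rewrite eqn_leq le1 ge.
  have sub : (M ^+ i.+1 <= M ^+ i)%MS by rewrite exprS -mulmxE submxMl.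
  have eqS : (M ^+ i.+1 == M ^+ i)%MS.
    by rewrite -(mxrank_leqif_eq sub) eqr.
  have stab : forall j, (M ^+ (j + i) == M ^+ i)%MS.
    elim=> [|j IHj]; first by rewrite add0n; apply/eqmxP.
    apply/eqmxP; rewrite addSn exprSr -mulmxE.
    apply: (eqmx_trans (eqmxMr M (eqmxP IHj))).
    by rewrite mulmxE -exprSr; apply/eqmxP.
  have := stab k; rewrite exprD Mk mul0r => /eqmx_rank; rewrite mxrank0 => /esym/eqP.
  by rewrite mxrank_eq0 => /eqP Mi0; left; rewrite exprS Mi0 mulr0.
case: (key m) => // H; apply/eqP; rewrite -mxrank_eq0 -(eqn_add2r m) add0n.
by rewrite eqn_leq H leq_addl.
Qed.

Section Main.
Variables (R : fieldType) (N : nat) (n p : 'I_N -> nat).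
Variables (A : forall j q : 'I_N, 'M[R]_(n j, n q)) (C : forall i q : 'I_N, 'M[R]_(p i, n q)).
Variables (E : nat -> rel 'I_N) (L : forall j : 'I_N, 'M[R]_(n j, p j)).
Variables (z : nat -> forall j : 'I_N, 'cV[R]_(n j)) (tau : nat -> 'I_N -> 'I_N -> option nat)
  (zh : nat -> 'I_N -> forall j : 'I_N, 'cV[R]_(n j)).
Hypothesis Hz : state_traj A z.
Hypothesis Hrun : freshness_run A C E L z tau zh.
Variable T : nat.
Hypothesis HT : jointly_strongly_connected E T.
Hypothesis Hnil : forall j, nilpotent_mx (A j j - L j *m C j j).

Lemma tau_src k j : tau k j j = Some 0%N.
Proof.
case: Hrun => Hi [Hs Hn]; case: k => [|k]; first by rewrite Hi eqxx.
by case: (Hs k j).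
Qed.

Lemma cand_some k j i l : candidate E tau k j i l -> exists b, tau k j l = Some b.
Proof.
rewrite /candidate => /andP [_]; case: (tau k j i) => [a|]; case: (tau k j l) => [b|] //= _;
  by exists b.
Qed.

Lemma step k j i : i != j ->
  (exists u : 'I_N,
    [/\ candidate E tau k j i u,
        (forall l, candidate E tau k j i l ->
           (odflt 0 (tau k j u) <= odflt 0 (tau k j l))%N),
        tau k.+1 j i = omap S (tau k j u) &
        zh k.+1 i j = A j j *m zh k u j
                      + \sum_(q < N | (q < j)%N) A j q *m zh k i q]) \/
  ((forall l, ~~ candidate E tau k j i l) /\
   tau k.+1 j i = omap S (tau k j i) /\
   zh k.+1 i j = A j j *m zh k i j
                 + \sum_(q < N | (q < j)%N) A j q *m zh k i q).
Proof.
case: Hrun => Hi [Hs Hn] ij; have [H1 H2] := Hn k j i ij.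
case: (boolP [exists l, candidate E tau k j i l]) => [/existsP ex | nex].
  by left; apply: H1.
right; split.
  by move=> l; apply/negP => c; move/negP: nex; apply; apply/existsP; exists l.
apply: H2 => -[l c]; move/negP: nex; apply; apply/existsP; exists l.
exact: c.
Qed.

Definition freshb (j : 'I_N) (s k : nat) (i : 'I_N) : bool :=
  if tau k j i is Some d then (d + s <= k)%N else false.

Lemma fresh_mono j s k i : freshb j s k i -> freshb j s k.+1 i.
Proof.
rewrite /freshb; case eq: (tau k j i) => [d|] // H.
case: (eqVneq i j) => [->|ij]; first by rewrite tau_src; lia.
case: (step k ij) => [[u [cu _ tu _]] | [nc [tu _]]].
  move: cu; rewrite /candidate eq tu; case: (tau k j u) => [b|] /andP [_ //] /=.
  lia.
by rewrite tu eq /=; lia.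
Qed.

Lemma fresh_src j s k : (s <= k)%N -> freshb j s k j.
Proof. by rewrite /freshb tau_src. Qed.

Lemma fresh_ge j s k i : freshb j s k i -> (s <= k)%N.
Proof. rewrite /freshb; case: (tau k j i) => // d; lia. Qed.

Lemma fresh_spread j s k i l : freshb j s k l -> neighbor E k i l -> freshb j s k.+1 i.
Proof.
move=> Fl nb.
case: (eqVneq i j) => [->|ij]; first by apply: fresh_src; have := fresh_ge Fl; lia.
case Fi: (freshb j s k i); first exact: fresh_mono.
move: Fl Fi; rewrite /freshb; case el: (tau k j l) => [b|] // hb.
move=> Fi.
have cl' : candidate E tau k j i l.
  rewrite /candidate nb el /=; move: Fi; case: (tau k j i) => [a|] //= Fi; lia.
case: (step k ij) => [[u [cu mu tu _]] | [nc _]]; last by move: (nc l); rewrite cl'.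
have [b' eb'] := cand_some cu.
have := mu l cl'; rewrite tu eb' el /=; lia.
Qed.

Lemma zid (V : zmodType) (a b c d e : V) : a + (b - c) + (d + c) - (e + b) = a - (e - d).
Proof.
rewrite opprB opprD !addrA (addrAC (a + b) (- c) d) subrK.
by rewrite (addrAC (a + b + d) (- e) (- b)) (addrAC a b d) addrK.
Qed.

Lemma out_split k (j : 'I_N) : output C z k j =
  C j j *m z k j + \sum_(q < N | (q < j)%N) C j q *m z k q.
Proof.
rewrite /output (bigD1 j) //=; congr (_ + _); apply: eq_bigl => q.
by rewrite ltn_neqAle andbC.
Qed.

Lemma src_err (j : 'I_N) s0 :
  (forall k, (s0 <= k)%N -> forall i (q : 'I_N), (q < j)%N -> zh k i q = z k q) ->
  forall k, (s0 <= k)%N ->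
  zh k.+1 j j - z k.+1 j = (A j j - L j *m C j j) *m (zh k j j - z k j).
Proof.
move=> Hlow k lek; case: Hrun => _ [Hs _]; have [_ ->] := Hs k j.
rewrite Hz out_split.
rewrite (eq_bigr (fun q : 'I_N => A j q *m z k q - L j *m (C j q *m z k q))); last first.
  by move=> q qj; rewrite Hlow // mulmxBl mulmxA.
rewrite sumrB -mulmx_sumr mulmxDr.
rewrite [in RHS]mulmxBr [X in _ = _ - X]mulmxBl -mulmxA.
exact: zid.
Qed.

Lemma src_ok (j : 'I_N) s0 :
  (forall k, (s0 <= k)%N -> forall i (q : 'I_N), (q < j)%N -> zh k i q = z k q) ->
  forall k, (s0 + n j <= k)%N -> zh k j j = z k j.
Proof.
move=> Hlow k lek.
set M := A j j - L j *m C j j.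
have [K HK] := Hnil j; have Mn := nilp_pow HK.
have claim : forall t, zh (s0 + t)%N j j - z (s0 + t)%N j = M ^+ t *m (zh s0 j j - z s0 j).
  elim=> [|t IH]; first by rewrite addn0 expr0 mul1mx.
  rewrite addnS (src_err Hlow (leq_addr t s0)) IH mulmxA exprS -mulmxE.
  by [].
have -> : k = (s0 + (n j + (k - s0 - n j)))%N by lia.
apply/eqP; rewrite -subr_eq0 claim exprD Mn mul0r mul0mx //.
Qed.

Lemma prop_ok (j : 'I_N) s0 s : (s0 <= s)%N ->
  (forall k, (s0 <= k)%N -> forall i (q : 'I_N), (q < j)%N -> zh k i q = z k q) ->
  (forall k, (s <= k)%N -> zh k j j = z k j) ->
  forall k i, freshb j s k i -> zh k i j = z k j.
Proof.
move=> les Hlow Hs; elim=> [|k IH] i Fi.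
  case: (eqVneq i j) => [->|ij]; first by apply: Hs; exact: fresh_ge Fi.
  by move: Fi; case: Hrun => Hi _; rewrite /freshb Hi (negbTE ij).
case: (eqVneq i j) => [->|ij]; first by apply: Hs; exact: fresh_ge Fi.
have Hlowk : forall b, (b + s <= k)%N -> forall (q : 'I_N), (q < j)%N -> zh k i q = z k q.
  by move=> b hb q qj; apply: Hlow => //; lia.
case: (step k ij) => [[u [cu _ tu ->]] | [_ [tu ->]]].
  have [b eb] := cand_some cu.
  move: Fi; rewrite /freshb tu eb /= => hb.
  rewrite IH; last by rewrite /freshb eb; lia.
  rewrite Hz; congr (_ + _); apply: eq_bigr => q qj; rewrite (Hlowk b) //; lia.
move: Fi; rewrite /freshb tu; case eb: (tau k j i) => [b|] //= hb.
rewrite IH; last by rewrite /freshb eb; lia.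
rewrite Hz; congr (_ + _); apply: eq_bigr => q qj; rewrite (Hlowk b) //; lia.
Qed.

Lemma path_cross (e : rel 'I_N) (S : {set 'I_N}) x y :
  connect e x y -> x \in S -> y \notin S ->
  exists a b, [/\ a \in S, b \notin S & e a b].
Proof.
move=> /connectP [pth pe ->]; elim: pth x pe => [|w pth IH] x /= pe xS yS.
  by rewrite xS in yS.
case/andP: pe => exw pw; case wS: (w \in S); first exact: IH pw wS yS.
by exists x, w; rewrite wS.
Qed.

Lemma F_mono_le j s k k' i : (k <= k')%N -> freshb j s k i -> freshb j s k' i.
Proof.
move=> /subnK <-; elim: (k' - k)%N => [|d IH] F; first by rewrite add0n.
by rewrite addSn; apply: fresh_mono; apply: IH.
Qed.

Definition Fset j s k := [set i | freshb j s k i].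

Lemma grow j s m : (s <= m * T)%N -> Fset j s (m * T) != setT ->
  (#|Fset j s (m * T)| < #|Fset j s (m.+1 * T)|)%N.
Proof.
move=> lsm Fn.
have [v vn] : exists v, v \notin Fset j s (m * T).
  apply/existsP; rewrite -negb_forall; apply: contra Fn => /forallP allF.
  by apply/eqP/setP => x; rewrite allF in_setT.
have jin : j \in Fset j s (m * T) by rewrite inE fresh_src.
have [a [b [aS bS]]] := path_cross (HT.2 m j v) jin vn.
rewrite /union_rel => /hasP [t tin Et]; move: tin; rewrite mem_iota => /andP [t1 t2].
have ab : a != b by apply: contraNneq bS => <-.
have Fb : freshb j s t.+1 b.
  apply: (@fresh_spread j s t b a); last by rewrite /neighbor ab Et.
  by move: aS; rewrite inE; apply: F_mono_le.
apply: proper_card; apply/properP; split.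
  apply/subsetP => x; rewrite !inE; apply: F_mono_le; rewrite mulSn; lia.
exists b => //; rewrite inE; apply: F_mono_le Fb; rewrite mulSn; lia.
Qed.

Lemma cover j s m : (s <= m * T)%N -> forall c,
  (minn N c.+1 <= #|Fset j s ((m + c) * T)|)%N.
Proof.
move=> lsm; elim=> [|c IH].
  rewrite addn0; apply: leq_trans (geq_minr _ _) _; apply/card_gt0P; exists j.
  by rewrite inE fresh_src.
case: (eqVneq (Fset j s ((m + c) * T)) setT) => [Fall | Fn].
  apply: leq_trans (geq_minl _ _) _.
  have : (#|Fset j s ((m + c) * T)| <= #|Fset j s ((m + c.+1) * T)|)%N.
    apply: subset_leq_card; apply/subsetP => x; rewrite !inE; apply: F_mono_le.
    by rewrite addnS mulSn leq_addl.
  by rewrite Fall cardsT card_ord.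
have lsm' : (s <= (m + c) * T)%N by apply: leq_trans lsm _; rewrite leq_mul2r leq_addr orbT.
have := grow lsm' Fn; rewrite addnS; move: IH; lia.
Qed.

Lemma all_fresh j s k i : (1 < N)%N -> (s + 2 * (N - 1) * T <= k)%N -> freshb j s k i.
Proof.
move=> N2 lek; have T0 := HT.1.
set q := (s %/ T)%N.
have hq : (q * T <= s)%N by rewrite /q leq_trunc_div.
have hq2 : (s < q * T + T)%N.
  by rewrite {1}(divn_eq s T) -/q ltn_add2l ltn_pmod.
have lsm : (s <= q.+1 * T)%N by rewrite mulSn; lia.
have := cover j lsm (N - 1); rewrite (_ : (N - 1).+1 = N) ?minnn; last by lia.
move=> cN.
have Fall : Fset j s ((q.+1 + (N - 1)) * T) = setT.
  apply/eqP; rewrite eqEcard subsetT cardsT card_ord; exact: cN.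
have : i \in Fset j s ((q.+1 + (N - 1)) * T) by rewrite Fall in_setT.
rewrite inE; apply: F_mono_le.
rewrite mulnDl mulSn.
have : ((N - 1) * T + T <= 2 * (N - 1) * T)%N.
  rewrite -mulnA mul2n -addnn leq_add2l; rewrite -[X in (X <= _)%N]mul1n leq_mul2r; lia.
lia.
Qed.

Lemma sum_sub (P Q : pred 'I_N) (F : 'I_N -> nat) : (forall i, P i -> Q i) ->
  (\sum_(i < N | P i) F i <= \sum_(i < N | Q i) F i)%N.
Proof.
move=> H; rewrite [X in (X <= _)%N]big_mkcond [X in (_ <= X)%N]big_mkcond.
apply: leq_sum => i _; case Pi: (P i); last by [].
by rewrite (H i Pi).
Qed.

Definition Ssum (j : 'I_N) := (\sum_(q < N | (q < j)%N) n q)%N.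

Lemma S_step (q j : 'I_N) : (q < j)%N -> (Ssum q + n q <= Ssum j)%N.
Proof.
move=> qj; rewrite /Ssum [X in (_ <= X)%N](bigD1 q) //= addnC leq_add2l.
apply: sum_sub => i iq; apply/andP; split; first exact: ltn_trans iq qj.
by apply: contraTneq iq => ->; rewrite ltnn.
Qed.

Lemma S_tot (j : 'I_N) : (Ssum j + n j <= \sum_(q < N) n q)%N.
Proof.
rewrite /Ssum [X in (_ <= X)%N](bigD1 j) //= addnC leq_add2l.
apply: sum_sub => i ij; by apply: contraTneq ij => ->; rewrite ltnn.
Qed.

Lemma main_ok k (i j : 'I_N) :
  (\sum_(q < N) n q + 2 * N * (N - 1) * T <= k)%N -> zh k i j = z k j.
Proof.
set D := (2 * (N - 1) * T)%N.
have claim : forall j0 (j : 'I_N), (j < j0)%N -> forall k,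
    (Ssum j + j * D + n j + D <= k)%N -> forall i, zh k i j = z k j.
  elim=> [|j0 IH] j' // ltj k' lek i'.
  case: (ltnP j' j0) => [lt|ge]; first exact: IH.
  have Hlow : forall k, (Ssum j' + j' * D <= k)%N ->
      forall i (q : 'I_N), (q < j')%N -> zh k i q = z k q.
    move=> k'' lek'' i'' q qj; apply: (IH q); first by lia.
    have := S_step qj.
    have : (q * D + D <= j' * D)%N by rewrite addnC -mulSn leq_mul2r qj orbT.
    lia.
  have Hs := src_ok Hlow.
  case: (eqVneq i' j') => [->|ij]; first by apply: Hs; lia.
  have N2 : (1 < N)%N.
    have := ltn_ord i'; have := ltn_ord j'; have : (i' : nat) != j' by [].
    lia.
  apply: (prop_ok (leq_addr (n j') _) Hlow Hs).
  by apply: all_fresh.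
move=> hk; apply: (claim N j (ltn_ord j)).
have := S_tot j.
have : (j.+1 * D <= N * D)%N by rewrite leq_mul2r ltn_ord orbT.
have e : (2 * N * (N - 1) * T = N * D)%N by rewrite /D -!mulnA mulnCA.
rewrite mulSn; lia.
Qed.

End Main.

Theorem corollary1 (R : realFieldType) (N : nat) (n p : 'I_N -> nat)
    (A : forall j q : 'I_N, 'M[R]_(n j, n q))
    (C : forall i q : 'I_N, 'M[R]_(p i, n q))
    (E : nat -> rel 'I_N) (T : nat) :
  block_lower A -> block_lower C ->
  (forall j : 'I_N, observable (A j j) (C j j)) ->
  jointly_strongly_connected E T ->
  (exists L : forall j : 'I_N, 'M[R]_(n j, p j),
      forall j : 'I_N, nilpotent_mx (A j j - L j *m C j j)) /\
  (forall L : forall j : 'I_N, 'M[R]_(n j, p j),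
     (forall j : 'I_N, nilpotent_mx (A j j - L j *m C j j)) ->
     forall (z : nat -> forall j : 'I_N, 'cV[R]_(n j))
            (tau : nat -> 'I_N -> 'I_N -> option nat)
            (zh : nat -> 'I_N -> forall j : 'I_N, 'cV[R]_(n j)),
       state_traj A z ->
       freshness_run A C E L z tau zh ->
       forall (k : nat) (i j : 'I_N),
         (\sum_(q < N) n q + 2 * N * (N - 1) * T <= k)%N ->
         zh k i j = z k j).
Proof.
move=> _ _ obs HT; split.
  have H : forall j, {L : 'M[R]_(n j, p j) | nilpotent_mx (A j j - L *m C j j)}.
    by move=> j; apply: constructive_indefinite_description; exact: deadbeat (obs j).
  by exists (fun j => sval (H j)) => j; exact: (svalP (H j)).
move=> L Hnil z tau zh Hz Hrun k i j hk.
exact: (main_ok Hz Hrun HT Hnil i j hk).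
Qed.
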